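(* Let $\mathcal A$ and $\mathcal B$ be complete NFAs over the same finite alphabet $\Sigma$. Then $\mathcal L(\mathcal B)\subseteq\mathcal L(\mathcal A)$ if and only if $\mathcal L(\mathcal B_f)\subseteq\mathcal L(\mathcal A_f)$, where $\mathcal A_f,\mathcal B_f$ are the NBWs obtained by the construction below.
   Context: An NFA $\mathcal A=(\Sigma,Q,q_0,\delta,F)$ (with $\delta:Q\times\Sigma\to 2^Q$) is complete if $\delta(q,\sigma)\neq\emptyset$ for all $q,\sigma$; $\mathcal L(\mathcal A)\subseteq\Sigma^*$ is its language of finite words. An NBW is the same kind of tuple read on infinite words, accepting a word if some run visits a final state infinitely often. For a complete NFA $\mathcal A=(\Sigma,Q,q_0,\delta,F)$, the NBW $\mathcal A_f=(\Sigma_\$,Q\cup\{f\},q_0,\delta_f,\{f\})$ is defined with a fresh letter $\$\notin\Sigma$, $\Sigma_\$=\Sigma\cup\{\$\}$, a fresh state $f\notin Q$, and: $\delta_f(q,\sigma)=\delta(q,\sigma)$ for $q\in Q,\sigma\in\Sigma$; $\delta_f(q,\$)=\{f\}$ for $q\in F$; $\delta_f(q,\$)=\{q_0\}$ for $q\in Q\setminus F$; and $\delta_f(f,\sigma)=\delta_f(q_0,\sigma)$ for all $\sigma\in\Sigma_\$$. *)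

(* Defs.v *)
From mathcomp Require Import all_boot.
Set Implicit Arguments. Unset Strict Implicit. Unset Printing Implicit Defensive.

Record automaton (Sigma Q : finType) := Automaton {
  init  : Q;
  delta : Q -> Sigma -> {set Q};
  final : {set Q}
}.

Definition complete (Sigma Q : finType) (A : automaton Sigma Q) : Prop :=
  forall (q : Q) (a : Sigma), delta A q a != set0.

(* Finite-word acceptance: a run q0 = init, q1, ..., qn on w = a1 ... an,
   given as the sequence rs = [q1; ...; qn] of successor states, with
   q_i \in delta q_(i-1) a_i and q_n final (q_n = last init rs). *)
Fixpoint run_ok (Sigma Q : finType) (A : automaton Sigma Q)
    (q : Q) (w : seq Sigma) (rs : seq Q) : bool :=
  match w, rs with
  | [::], [::] => true
  | a :: w', q' :: rs' => (q' \in delta A q a) && run_ok A q' w' rs'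
  | _, _ => false
  end.

Definition nfa_accepts (Sigma Q : finType) (A : automaton Sigma Q) (w : seq Sigma) : Prop :=
  exists rs : seq Q, run_ok A (init A) w rs && (last (init A) rs \in final A).

Definition nfa_incl (Sigma Q P : finType) (B : automaton Sigma P) (A : automaton Sigma Q) : Prop :=
  forall w : seq Sigma, nfa_accepts B w -> nfa_accepts A w.

Definition nbw_accepts (Sigma Q : finType) (A : automaton Sigma Q) (w : nat -> Sigma) : Prop :=
  exists r : nat -> Q,
    r 0 = init A /\
    (forall i, r i.+1 \in delta A (r i) (w i)) /\
    (forall n, exists2 i, n <= i & r i \in final A).

Definition nbw_incl (Sigma Q P : finType) (B : automaton Sigma P) (A : automaton Sigma Q) : Prop :=
  forall w : nat -> Sigma, nbw_accepts B w -> nbw_accepts A w.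

(* The construction A_f: alphabet Sigma_$ = option Sigma (None = $),
   states Q \cup {f} = option Q (None = f), initial q0, final {f}. *)
Definition delta_f (Sigma Q : finType) (A : automaton Sigma Q)
    (q : option Q) (a : option Sigma) : {set option Q} :=
  let q' := match q with Some q => q | None => init A end in
  match a with
  | Some s => [set Some x | x in delta A q' s]
  | None => if q' \in final A then [set None] else [set Some (init A)]
  end.

Definition Af (Sigma Q : finType) (A : automaton Sigma Q) : automaton (option Sigma) (option Q) :=
  Automaton (Some (init A)) (delta_f A) [set None].

(* Main.v *)
Require Import Defs.
From mathcomp Require Import all_boot.
From mathcomp Require Import zify.
From Stdlib Require Import Classical ClassicalEpsilon.
Set Implicit Arguments. Unset Strict Implicit. Unset Printing Implicit Defensive.

Definition fr (T : Type) (x : option T) (rs : seq T) (t : nat) : option T :=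
  if t is t'.+1 then nth None (map Some rs) t' else x.

Section Gen.
Variables (Sigma Q : finType) (A : automaton Sigma Q).

Lemma dfS q s y : (Some y \in delta_f A q (Some s)) = (y \in delta A (odflt (init A) q) s).
Proof. by rewrite /delta_f; case: q => [q|] /=; rewrite (mem_imset _ _ Some_inj). Qed.

Lemma dfN q s : (None \in delta_f A q (Some s)) = false.
Proof. by apply/negbTE/imsetP => -[]. Qed.

Lemma dNN q : (None \in delta_f A q None) = (odflt (init A) q \in final A).
Proof. by rewrite /delta_f; case: q => [q|] /=; case: ifP => _; rewrite in_set1. Qed.

Lemma dN_init q y : y \in delta_f A q None -> odflt (init A) y = init A.
Proof. by rewrite /delta_f; case: q => [q|] /=; case: ifP => _; rewrite in_set1 => /eqP ->. Qed.

Lemma run_ok_size p u rs : run_ok A p u rs -> size rs = size u.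
Proof.
elim: u p rs => [|a u IH] p [|q rs] //= /andP [_ H]; by rewrite (IH _ _ H).
Qed.

Lemma seq2fun u rs x : run_ok A (odflt (init A) x) u rs ->
  forall t, t < size u -> fr x rs t.+1 \in delta_f A (fr x rs t) (nth None (map Some u) t).
Proof.
elim: u rs x => [|a u IH] [|q rs] x //= /andP [Hq Hr] [|t] Ht /=.
- by rewrite dfS.
- have := IH rs (Some q) Hr t Ht. by case: t Ht.
Qed.

Lemma fr_last p u rs x : odflt (init A) x = p -> run_ok A p u rs ->
  odflt (init A) (fr x rs (size u)) = last p rs.
Proof.
move=> Hx /run_ok_size <-. case/lastP: rs => [|rs q] //=.
by rewrite size_rcons /= (nth_map q) ?size_rcons // nth_rcons ltnn eqxx last_rcons.
Qed.

Lemma fun2seq (w : nat -> option Sigma) (g : nat -> option Q) n j u :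
 [seq w m | m <- iota j n] = map Some u ->
 (forall m, j <= m < j + n -> g m.+1 \in delta_f A (g m) (w m)) ->
 run_ok A (odflt (init A) (g j)) u [seq odflt (init A) (g m.+1) | m <- iota j n] /\
 last (odflt (init A) (g j)) [seq odflt (init A) (g m.+1) | m <- iota j n] = odflt (init A) (g (j+n)).
Proof.
elim: n j u => [|n IH] j [|a u] //=.
- by rewrite addn0.
- move=> [Hw Hu] Hg.
  have Hj: g j.+1 \in delta_f A (g j) (w j) by apply Hg; lia.
  rewrite Hw in Hj.
  have [H1 H2] := IH j.+1 u Hu (fun m Hm => Hg m ltac:(lia)).
  rewrite addSnnS in H2; split => //.
  rewrite H1 andbT.
  case E: (g j.+1) Hj => [y|]; by rewrite ?dfS ?dfN.
Qed.

Lemma all_some (w : nat -> option Sigma) j n :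
  (forall m, j <= m < j + n -> w m != None) -> exists u, [seq w m | m <- iota j n] = map Some u.
Proof.
elim: n j => [|n IH] j H; first by exists [::].
have [u Hu] := IH j.+1 (fun m Hm => H m ltac:(lia)).
case E: (w j) => [a|]; last by have := H j ltac:(lia); rewrite E.
by exists (a :: u) => /=; rewrite E Hu.
Qed.

End Gen.

Section Fwd.
Variables (Sigma Q P : finType) (A : automaton Sigma Q) (B : automaton Sigma P).
Hypothesis Hincl : nfa_incl B A.
Hypothesis HcA : complete A.
Variables (w : nat -> option Sigma) (rB : nat -> option P).
Hypothesis HBt : forall i, rB i.+1 \in delta_f B (rB i) (w i).

Definition good (i : nat) (q : option Q) : Prop :=
  forall k, i <= k -> (forall m, i <= m < k -> w m != None) -> w k = None -> rB k.+1 = None ->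
  exists s : nat -> option Q,
    [/\ s i = q, (forall m, i <= m <= k -> s m.+1 \in delta_f A (s m) (w m)) & s k.+1 = None].

Lemma goodL j x : odflt (init A) x = init A -> odflt (init B) (rB j) = init B -> good j x.
Proof.
move=> Hx HB k Hjk Hbet Hwk Hrk.
set n := k - j. have Hk : k = j + n by rewrite /n subnKC.
have [u Hu] := @all_some _ w j n (fun m Hm => Hbet m ltac:(lia)).
have Hsz : size u = n by rewrite -(size_map Some) -Hu size_map size_iota.
have [HrunB HlastB] := fun2seq Hu (fun m _ => HBt m).
rewrite HB in HrunB HlastB. rewrite -Hk in HlastB.
have Hfin : odflt (init B) (rB k) \in final B.
  by rewrite -dNN -Hrk -Hwk.
have : nfa_accepts B u by exists [seq odflt (init B) (rB m.+1) | m <- iota j n]; rewrite HrunB /= HlastB.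
case/Hincl => rsA /andP [HrA HlA].
rewrite -Hx in HrA.
have Hsz2 := run_ok_size HrA.
exists (fun m => fr x rsA (m - j)); split.
- by rewrite subnn.
- move=> m /andP [H1 H2]. rewrite subSn //.
  case: (ltngtP m k) (H2) => // [Hlt|->] _.
  + have Ht: m - j < size u by lia.
    have := seq2fun HrA Ht.
    rewrite -Hu (nth_map 0) ?size_iota; last by lia.
    rewrite nth_iota; last by lia.
    by rewrite subnKC.
  + have -> : fr x rsA (k - j).+1 = None.
      by rewrite /= nth_default // size_map Hsz2 Hsz.
    rewrite Hwk dNN -/n -Hsz (fr_last (p := init A)) //.
    by rewrite Hx in HrA *.
- rewrite subSn //= nth_default // size_map Hsz2 Hsz. lia.
Qed.

Lemma step i q : good i q -> exists x, [/\ x \in delta_f A q (w i), good i.+1 x &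
   (w i = None -> rB i.+1 = None -> x = None)].
Proof.
move=> Hg. case E: (w i) => [a|].
- case: (classic (exists k, [/\ i <= k, (forall m, i <= m < k -> w m != None), w k = None & rB k.+1 = None])).
  + move=> [k [H1 H2 H3 H4]].
    have [s [Hs0 Hs1 Hs2]] := Hg k H1 H2 H3 H4.
    have Hik : i < k.
      rewrite ltn_neqAle H1 andbT; apply/eqP => Eik; by rewrite Eik H3 in E.
    exists (s i.+1); split => //.
    * by rewrite -Hs0 -E; apply Hs1; rewrite leqnn; lia.
    * move=> k' H1' H2' H3' H4'.
      have Ek : k' = k.
        case: (ltngtP k' k) => // Hc.
        - by have := H2 k' ltac:(lia); rewrite H3'.
        - by have := H2' k ltac:(lia); rewrite H3.
      subst k'. exists s; split => // m Hm; apply Hs1; lia.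
  + move=> Hn.
    have /set0Pn [y Hy] := HcA (odflt (init A) q) a.
    exists (Some y); split => //; first by rewrite dfS.
    move=> k' H1' H2' H3' H4'. exfalso; apply: Hn; exists k'; split => //; first lia.
    move=> m Hm. case: (ltngtP m i) => Hmi; [lia| |]; first by apply H2'; lia.
    by rewrite Hmi E.
- have HBi := HBt i. rewrite E in HBi.
  case EB: (rB i.+1) => [b|].
  + have Hne : delta_f A q None != set0.
      by rewrite /delta_f; case: ifP => _; apply/set0Pn; eexists; rewrite in_set1.
    have /set0Pn [y Hy] := Hne.
    exists y; split => //.
    apply: goodL; first exact: dN_init Hy.
    exact: dN_init HBi.
  + have [s [Hs0 Hs1 Hs2]] := Hg i (leqnn i) (fun m Hm => ltac:(lia)) E EB.
    exists None; split => //.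
    * by rewrite -Hs2 -Hs0 -E; apply Hs1; rewrite leqnn.
    * by apply: goodL => //; rewrite EB.
Qed.

End Fwd.

Lemma fwd (Sigma Q P : finType) (A : automaton Sigma Q) (B : automaton Sigma P) :
  complete A -> nfa_incl B A -> nbw_incl (Af B) (Af A).
Proof.
move=> HcA Hincl w [rB [HB0 [HBt HBinf]]].
have H : forall i q, exists x, good A w rB i q ->
   [/\ x \in delta_f A q (w i), good A w rB i.+1 x & (w i = None -> rB i.+1 = None -> x = None)].
  move=> i q; case: (classic (good A w rB i q)) => h.
  + have [x Hx] := step Hincl HcA HBt h; by exists x.
  + by exists None.
pose st i q := proj1_sig (constructive_indefinite_description _ (H i q)).
have Hst i q : good A w rB i q -> [/\ st i q \in delta_f A q (w i), good A w rB i.+1 (st i q) &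
   (w i = None -> rB i.+1 = None -> st i q = None)].
  exact: (proj2_sig (constructive_indefinite_description _ (H i q))).
pose rA := fix rA n := match n with 0 => Some (init A) | n'.+1 => st n' (rA n') end.
have Hgood n : good A w rB n (rA n).
  elim: n => [|n IH]; first by apply: (goodL Hincl HBt) => //; rewrite HB0.
  by case: (Hst n _ IH).
exists rA; split => //; split.
- by move=> i; case: (Hst i _ (Hgood i)).
- move=> n. have [i Hi] := HBinf n.+1.
  case: i Hi => // k Hk. rewrite in_set1 => /eqP Hrk.
  have Hwk : w k = None.
    have := HBt k; rewrite Hrk; case: (w k) => // a; by rewrite dfN.
  exists k.+1; first lia.
  case: (Hst k _ (Hgood k)) => _ _ H3.
  by rewrite in_set1 /= H3.
Qed.

Lemma bwd (Sigma Q P : finType) (A : automaton Sigma Q) (B : automaton Sigma P) :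
  nbw_incl (Af B) (Af A) -> nfa_incl B A.
Proof.
move=> H u [rsB /andP [HrB HlB]].
set L := (size u).+1.
have HL : 0 < L by [].
pose w t := nth None (map Some u) (t %% L).
pose rB t := fr (if t == 0 then Some (init B) else None) rsB (t %% L).
have modS_lt t : t %% L < size u -> t.+1 %% L = (t %% L).+1.
  by move=> Ht; rewrite {1}(divn_eq t L) -addnS modnMDl modn_small.
have modS_eq t : t %% L = size u -> t.+1 %% L = 0.
  by move=> Ht; rewrite {1}(divn_eq t L) -addnS Ht -/L -mulSnr modnMl.
have : nbw_accepts (Af B) w.
  exists rB; split; first by rewrite /rB mod0n.
  split.
  - move=> t.
    have Hx : odflt (init B) (if t == 0 then Some (init B) else None) = init B by case: (t == 0).
    have Hlt : t %% L < L by rewrite ltn_pmod.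
    case: (ltngtP (t %% L) (size u)) => Ht; last 1 first.
    + rewrite /rB /w modS_eq // Ht nth_default ?size_map //= dNN.
      rewrite (fr_last Hx HrB). done.
    + rewrite /rB /w modS_lt //.
      by have := seq2fun (x := if t == 0 then Some (init B) else None) (rs := rsB) (A := B) ltac:(rewrite Hx; exact HrB) Ht.
    + rewrite ltnS leqNgt Ht in Hlt. done.
  - move=> n; exists (n.+1 * L).
    + exact: leq_trans (leqnSn n) (leq_pmulr _ HL).
    + by rewrite /rB modnMl muln_eq0 /= in_set1.
move/H => [rA [HA0 [HAt HAinf]]].
have [[|k] Hi Hfi] := HAinf 1 => //.
rewrite in_set1 in Hfi; move/eqP: Hfi => Hrk.
have Hwk : w k = None.
  have := HAt k; rewrite Hrk; case: (w k) => // a; by rewrite dfN.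
have Hkm : k %% L = size u.
  have Hlt : k %% L < L by rewrite ltn_pmod.
  case: (ltngtP (k %% L) (size u)) => Ht //.
  + have [a0 _] : exists a0 : Sigma, True.
      by move: Ht; rewrite -/L; case: (u) => [|a ?] //; exists a.
    by move: Hwk; rewrite /w (nth_map a0).
  + rewrite ltnS leqNgt Ht in Hlt. done.
set j := k %/ L * L.
have Hkj : k = j + size u by rewrite {1}(divn_eq k L) Hkm.
have Hinit : odflt (init A) (rA j) = init A.
  rewrite /j; case E: (k %/ L) => [|q']; first by rewrite mul0n HA0.
  have -> : q'.+1 * L = (q' * L + size u).+1 by rewrite mulSnr /L addnS.
  have := HAt (q' * L + size u).
  have -> : w (q' * L + size u) = None.
    by rewrite /w modnMDl modn_small // nth_default ?size_map.
  exact: dN_init.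
have Hu : [seq w m | m <- iota j (size u)] = map Some u.
  apply: (eq_from_nth (x0 := None)); first by rewrite !size_map size_iota.
  move=> t; rewrite size_map size_iota => Ht.
  rewrite (nth_map 0) ?size_iota // nth_iota // /w /j modnMDl modn_small //.
  exact: ltn_trans Ht _.
have [HrunA HlastA] := fun2seq Hu (fun m _ => HAt m).
rewrite Hinit -Hkj in HrunA HlastA.
exists [seq odflt (init A) (rA m.+1) | m <- iota j (size u)].
by rewrite HrunA HlastA /= -dNN -Hrk -Hwk.
Qed.

Theorem lemma5 (Sigma Q P : finType) (A : automaton Sigma Q) (B : automaton Sigma P) :
  complete A -> complete B ->
  (nfa_incl B A <-> nbw_incl (Af B) (Af A)).
Proof.
move=> HA HB; split; [exact: fwd | exact: bwd].
Qed.
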